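(* Let $A\in\mathbb{C}^{n\times n}$ and $m\in\mathbb{N}=\{1,2,\dots\}$. Then the system of equations in $X\in\mathbb{C}^{n\times n}$ $$XAX=X,\qquad AX=(A^{\mathrm{cEP}})^mA^mP_{A^m},\qquad XA=(A^{\mathrm{cEP}})^{m+1}A^mP_{A^m}A$$ is consistent and its unique solution is $X=A^{\#_m}$.
   Context: For $A\in\mathbb{C}^{n\times n}$: $A^\dagger$ Moore–Penrose inverse, $P_A=AA^\dagger$, $\mathcal{R}(\cdot)$ column space. The index $k=\mathrm{Ind}(A)$ is the smallest nonnegative integer with $\mathcal{R}(A^k)=\mathcal{R}(A^{k+1})$ ($A^0=I_n$). The core-EP inverse $A^{\mathrm{cEP}}$ is the unique $X$ with $XAX=X$ and $\mathcal{R}(X)=\mathcal{R}(X^* )=\mathcal{R}(A^k)$. For $m\in\mathbb{N}$, the $m$-weak group inverse is $A^{\mathrm{WG}_m}:=(A^{\mathrm{cEP}})^{m+1}A^m$ and the $m$-weak core inverse is $A^{\#_m}:=A^{\mathrm{WG}_m}P_{A^m}$. *)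

(* Defs.v *)
From mathcomp Require Import all_boot all_order all_algebra.
From Stdlib Require Import ClassicalEpsilon.
Set Implicit Arguments. Unset Strict Implicit. Unset Printing Implicit Defensive.
Import Order.TTheory GRing.Theory Num.Theory.
Local Open Scope ring_scope.

Section Defs.
Variables (C : numClosedFieldType) (n : nat).
Implicit Types A X : 'M[C]_n.

Definition ctr A : 'M[C]_n := (map_mx (fun x => x^*) A)^T.

Definition mxpow A (k : nat) : 'M[C]_n := iter k (mulmx A) 1%:M.

(* column space equality R(B) = R(D) (column space = row space of transpose) *)
Definition colsp_eq (B D : 'M[C]_n) : bool := (B^T == D^T)%MS.

Definition is_MP A X : Prop :=
  [/\ A *m X *m A = A, X *m A *m X = X,
      ctr (A *m X) = A *m X & ctr (X *m A) = X *m A].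

Definition MPinv A : 'M[C]_n := epsilon (inhabits 0) (is_MP A).

Definition proj A : 'M[C]_n := A *m MPinv A.

Definition is_index A (k : nat) : Prop :=
  colsp_eq (mxpow A k) (mxpow A k.+1) /\
  forall j, (j < k)%N -> ~~ colsp_eq (mxpow A j) (mxpow A j.+1).
Definition ind A : nat := epsilon (inhabits 0%N) (is_index A).

Definition is_cEP A X : Prop :=
  [/\ X *m A *m X = X, colsp_eq X (mxpow A (ind A))
    & colsp_eq (ctr X) (mxpow A (ind A))].
Definition cEP A : 'M[C]_n := epsilon (inhabits 0) (is_cEP A).

Definition WG A (m : nat) : 'M[C]_n := mxpow (cEP A) m.+1 *m mxpow A m.

Definition wcore A (m : nat) : 'M[C]_n := WG A m *m proj (mxpow A m).

End Defs.

(* Main.v *)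
Require Import Defs.
From mathcomp Require Import all_boot all_order all_algebra zify.
From Stdlib Require Import ClassicalEpsilon Classical.
Set Implicit Arguments. Unset Strict Implicit. Unset Printing Implicit Defensive.
Import Order.TTheory GRing.Theory Num.Theory.
Local Open Scope ring_scope.

Section Aux.
Variable C : numClosedFieldType.

Definition ctm p q (M : 'M[C]_(p,q)) : 'M[C]_(q,p) := (map_mx (fun x => x^*) M)^T.

Lemma ctmM p q r (M : 'M[C]_(p,q)) (N : 'M[C]_(q,r)) :
  ctm (M *m N) = ctm N *m ctm M.
Proof. by rewrite /ctm map_mxM trmx_mul. Qed.

Lemma ctmK p q (M : 'M[C]_(p,q)) : ctm (ctm M) = M.
Proof. by apply/matrixP => i j; rewrite !mxE conjCK. Qed.

Lemma ctm1 p : ctm (1%:M : 'M[C]_p) = 1%:M.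
Proof. by rewrite /ctm map_mx1 trmx1. Qed.

Lemma ctm_mul0 p q (M : 'M[C]_(p,q)) : M *m ctm M = 0 -> M = 0.
Proof.
move=> H; apply/matrixP => i j.
have := congr1 (fun N : 'M[C]_p => N i i) H; rewrite !mxE => /psumr_eq0P H2.
have H3 : forall k : 'I_q, true -> 0 <= M i k * ctm M k i.
  by move=> k _; rewrite !mxE mul_conjC_ge0.
have := H2 H3 j isT.
by rewrite /= !mxE => /eqP; rewrite mul_conjC_eq0 => /eqP ->.
Qed.

Lemma ctm_mul0' p q (M : 'M[C]_(p,q)) : ctm M *m M = 0 -> M = 0.
Proof.
move=> H; rewrite -[M]ctmK; have -> : ctm M = 0 by apply: ctm_mul0; rewrite ctmK.
by apply/matrixP => i j; rewrite !mxE conjC0.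
Qed.

End Aux.

Section MP.
Variable C : numClosedFieldType.

Lemma ctm_inv r (H : 'M[C]_r) : H \in unitmx -> ctm H = H -> ctm (invmx H) = invmx H.
Proof.
move=> uH hH.
have e : ctm (invmx H) *m H = 1%:M.
  by rewrite -[X in _ *m X]hH -ctmM mulmxV // ctm1.
by rewrite -[ctm (invmx H)]mulmx1 -(mulmxV uH) mulmxA e mul1mx.
Qed.

Lemma MP_exists n (A : 'M[C]_n) : exists X, is_MP A X.
Proof.
have [r [F [G [eA [fF fG]]]]] : exists r (F : 'M[C]_(n,r)) (G : 'M[C]_(r,n)),
  F *m G = A /\ row_full F /\ row_free G.
  exists (\rank A), (col_base A), (row_base A); split; [exact: mulmx_base | split; [exact: col_base_full | exact: row_base_free]].
set HF := ctm F *m F; set HG := G *m ctm G.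
have uF : HF \in unitmx.
  rewrite -row_free_unit; apply: inj_row_free => v hv.
  have w0 : v *m ctm F = 0.
    apply: ctm_mul0; rewrite ctmM ctmK mulmxA -(mulmxA v) hv mul0mx //.
  have [B hB] := row_fullP fF.
  by rewrite -[v]mulmx1 -ctm1 -hB ctmM mulmxA w0 mul0mx.
have uG : HG \in unitmx.
  rewrite -row_free_unit; apply: inj_row_free => v hv.
  have w0 : v *m G = 0.
    apply: ctm_mul0; rewrite ctmM mulmxA -(mulmxA v) hv mul0mx //.
  have [B hB] := row_freeP fG.
  by rewrite -[v]mulmx1 -hB mulmxA w0 mul0mx.
have hF : ctm HF = HF by rewrite /HF ctmM ctmK.
have hG : ctm HG = HG by rewrite /HG ctmM ctmK.
have iF := ctm_inv uF hF; have iG := ctm_inv uG hG.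
exists (ctm G *m invmx HG *m invmx HF *m ctm F).
have AX : A *m (ctm G *m invmx HG *m invmx HF *m ctm F) = F *m invmx HF *m ctm F.
  rewrite -eA -!mulmxA (mulmxA G (ctm G)) (mulmxA HG) mulmxV // mul1mx //.
have XA : (ctm G *m invmx HG *m invmx HF *m ctm F) *m A = ctm G *m invmx HG *m G.
  rewrite -eA -!mulmxA (mulmxA (ctm F) F) (mulmxA (invmx HF)) mulVmx // mul1mx //.
split.
- rewrite AX -eA -!mulmxA (mulmxA (ctm F) F) (mulmxA (invmx HF)) mulVmx // mul1mx //.
- rewrite XA -!mulmxA (mulmxA G (ctm G)) (mulmxA HG) mulmxV // mul1mx //.
- by rewrite /ctr -/(ctm _) AX !ctmM ctmK iF mulmxA.
- by rewrite /ctr -/(ctm _) XA !ctmM ctmK iG mulmxA.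
Qed.

End MP.

Section Ind.
Variables (C : numClosedFieldType) (n : nat).
Implicit Types A B D X : 'M[C]_n.

Lemma mxpowSr A k : mxpow A k.+1 = mxpow A k *m A.
Proof.
elim: k => [|k IH]; first by rewrite /mxpow /= mulmx1 mul1mx.
by rewrite -[mxpow A k.+2]/(A *m mxpow A k.+1) {1}IH mulmxA.
Qed.

Lemma mxpowD A a b : mxpow A (a + b) = mxpow A a *m mxpow A b.
Proof.
elim: a => [|a IH]; first by rewrite add0n /mxpow /= mul1mx.
by rewrite addSn -[mxpow A (a + b).+1]/(A *m mxpow A (a + b)) IH mulmxA.
Qed.

Lemma colsubP B D : (B^T <= D^T)%MS <-> exists Z, B = D *m Z.
Proof.
split; first by case/submxP => Z hZ; exists Z^T; rewrite -[B]trmxK hZ trmx_mul trmxK.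
by case=> Z ->; rewrite trmx_mul submxMl.
Qed.

Lemma colsp_eqP B D : colsp_eq B D <-> (exists Z, B = D *m Z) /\ (exists Z, D = B *m Z).
Proof.
rewrite /colsp_eq; split; first by case/andP => /colsubP h1 /colsubP h2.
by case=> /colsubP h1 /colsubP h2; apply/andP.
Qed.

Lemma index_exists A : exists k, is_index A k.
Proof.
pose P := fun k => colsp_eq (mxpow A k) (mxpow A k.+1).
have hex : exists k, P k.
  apply: NNPP => hn.
  have hlt : forall k, (\rank (mxpow A k.+1)^T < \rank (mxpow A k)^T)%N.
    move=> k.
    have s : ((mxpow A k.+1)^T <= (mxpow A k)^T)%MS.
      by apply/colsubP; exists A; rewrite mxpowSr.
    case: (mxrank_leqif_eq s) => le eqv.
    rewrite ltn_neqAle le eqv andbT.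
    apply/negP => h; apply: hn; exists k; rewrite /P /colsp_eq.
    by case/andP: h => h1 h2; apply/andP.
  have hb : forall k, (\rank (mxpow A k)^T + k <= n)%N.
    elim=> [|k IH]; first by rewrite addn0 rank_leq_row.
    have := hlt k; lia.
  have := hb n.+1; lia.
case: (ex_minnP hex) => k Pk hmin.
exists k; split=> // j hj; apply/negP => Pj; have := hmin j Pj; lia.
Qed.

Lemma ind_spec A : is_index A (ind A).
Proof. by rewrite /ind; apply: epsilon_spec; apply: index_exists. Qed.

Lemma MP_spec A : is_MP A (MPinv A).
Proof. by rewrite /MPinv; apply: epsilon_spec; apply: MP_exists. Qed.

Lemma ind_incl A j : exists Z, mxpow A (ind A) = mxpow A j *m Z.
Proof.
set k := ind A.
have [[Z0 hZ0] _] := (colsp_eqP _ _).1 (ind_spec A).1.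
have hi : forall i, exists Z, mxpow A k = mxpow A (k + i) *m Z.
  elim=> [|i [Z hZ]]; first by exists 1%:M; rewrite addn0 mulmx1.
  exists (Z *m Z0); rewrite addnS hZ0 [mxpow A k.+1]/= {1}hZ.
  by rewrite !mulmxA.
case: (leqP j k) => hjk.
  by exists (mxpow A (k - j)); rewrite -mxpowD subnKC.
have [Z hZ] := hi (j - k)%N; exists Z; rewrite hZ subnKC //; exact: ltnW.
Qed.

Lemma cEP_exists A : exists X, is_cEP A X.
Proof.
set k := ind A.
have [[Z0 hZ0] _] := (colsp_eqP _ _).1 (ind_spec A).1.
set B := mxpow A k.+1.
have eB : A *m mxpow A k = B by [].
have eB2 : B = mxpow A k *m A by rewrite /B mxpowSr.
have hZ : mxpow A k = B *m Z0 by [].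
clearbody B.
have [W hW] : exists W, mxpow A k = W *m B.
  apply/submxP.
  have s : (B <= mxpow A k)%MS by rewrite -eB submxMl.
  case: (mxrank_leqif_sup s) => _ <-.
  have := (ind_spec A).1; rewrite /colsp_eq -/k => /eqmx_rank.
  by rewrite !mxrank_tr => ->; rewrite -eB.
have [h1 h2 h3 h4] := MP_spec B.
set Bd := MPinv B in h1 h2 h3 h4.
have {}h3 : ctm (B *m Bd) = B *m Bd := h3.
exists (mxpow A k *m Bd).
have eX : mxpow A k *m Bd *m A *m (mxpow A k *m Bd) = mxpow A k *m Bd.
  by rewrite -!mulmxA (mulmxA A) eB (mulmxA Bd) h2.
have eAX : A *m (mxpow A k *m Bd) = B *m Bd by rewrite mulmxA eB.
split=> //.
- apply/colsp_eqP; split; first by exists Bd.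
  by exists B; rewrite [in RHS]hW -!mulmxA (mulmxA B Bd) h1 -hW.
- rewrite /ctr -/(ctm _); apply/colsp_eqP; split.
  + exists (A *m (Bd *m ctm (mxpow A k *m Bd))).
    rewrite -{1}eX -mulmxA eAX ctmM h3 eB2 !mulmxA //.
  + exists (ctm A *m B *m Z0).
    by rewrite {1}hZ -{1}h1 -h3 -eAX ctmM !mulmxA.
Qed.

End Ind.

Section Main.
Variables (C : numClosedFieldType) (n : nat).
Implicit Types A B D X : 'M[C]_n.

Lemma cEP_spec A : is_cEP A (cEP A).
Proof. by rewrite /cEP; apply: epsilon_spec; apply: cEP_exists. Qed.

Lemma cEP_props A :
  [/\ cEP A *m A *m cEP A = cEP A, A *m cEP A *m cEP A = cEP A
    & forall j, exists Z, cEP A = mxpow A j *m Z].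
Proof.
move: (cEP_spec A) (@ind_incl C n A); move: (cEP A) => E [e1 e2 e3] hinc.
have [[Z1 hZ1] _] := (colsp_eqP _ _).1 e2.
have [_ [Z4 hZ4]] := (colsp_eqP _ _).1 e3.
have {}hZ4 : mxpow A (ind A) = ctm E *m Z4 := hZ4.
split=> //; last first.
  by move=> j; have [Z hZ] := hinc j; exists (Z *m Z1); rewrite hZ1 hZ mulmxA.
set M := A *m E *m E - E.
have hM1 : M = ctm E *m (Z4 *m (A *m Z1 *m E - Z1)).
  rewrite mulmxA -hZ4 mulmxBr /M !mulmxA -mxpowSr.
  rewrite -[mxpow A (ind A).+1]/(A *m mxpow A (ind A)) -(mulmxA A (mxpow A (ind A)) Z1).
  by rewrite -hZ1.
have hEM : E *m M = 0 by rewrite /M mulmxBr !mulmxA e1 subrr.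
have hM : M = 0.
  apply: ctm_mul0'.
  have -> : ctm M *m M = ctm (Z4 *m (A *m Z1 *m E - Z1)) *m (E *m M).
    by rewrite {1}hM1 ctmM ctmK mulmxA.
  by rewrite hEM mulmx0.
by apply/eqP; rewrite -subr_eq0 -/M hM.
Qed.

End Main.

Theorem theorem4p8 (C : numClosedFieldType) (n : nat) (A : 'M[C]_n) (m : nat) :
  (0 < m)%N ->
  forall X : 'M[C]_n,
    [/\ X *m A *m X = X,
        A *m X = mxpow (cEP A) m *m mxpow A m *m proj (mxpow A m)
      & X *m A = mxpow (cEP A) m.+1 *m mxpow A m *m proj (mxpow A m) *m A]
    <-> X = wcore A m.
Proof.
case: m => // m _ X.
have [f1 f2 f3] := cEP_props A.
have [h1 _ _ _] := MP_spec (mxpow A m.+1).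
rewrite /wcore /WG /proj.
move: (MPinv (mxpow A m.+1)) h1 => Bd h1.
move: (cEP A) f1 f2 f3 => E f1 f2 f3.
set Am := mxpow A m.+1 in h1 *.
have PE : Am *m Bd *m E = E.
  have [Z ->] := f3 m.+1; change (Am *m Bd *m (Am *m Z) = Am *m Z); by rewrite mulmxA h1.
set P := Am *m Bd in PE *.
have F2 : forall j, A *m mxpow E j.+2 = mxpow E j.+1.
  move=> j; rewrite -[mxpow E j.+2]/(E *m (E *m mxpow E j)) !mulmxA f2 //.
have F3 : forall j, mxpow A j *m mxpow E j.+1 = E.
  elim=> [|j IH]; first by rewrite -[mxpow E 1]/(E *m 1%:M) mul1mx mulmx1.
  by rewrite mxpowSr -mulmxA F2.
have PEj : forall j, P *m mxpow E j.+1 = mxpow E j.+1.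
  by move=> j; rewrite -[mxpow E j.+1]/(E *m mxpow E j) mulmxA PE.
have AmEm : Am *m mxpow E m.+1 = A *m E.
  rewrite -F2 mulmxA /Am -mxpowSr -[mxpow A m.+2]/(A *m mxpow A m.+1) -mulmxA F3 //.
set W := mxpow E m.+2 *m Am *m P.
have e21 : A *m mxpow E m.+2 = mxpow E m.+1 := F2 m.
have pe1 : P *m mxpow E m.+1 = mxpow E m.+1 := PEj m.
have e2s : mxpow E m.+2 = mxpow E m.+1 *m E := mxpowSr E m.+1.
clear F2 F3 PEj; rewrite /W; clear W; clearbody P Am.
move: (mxpow E m.+1) (mxpow E m.+2) e21 pe1 e2s AmEm => E1 E2 e21 pe1 e2s AmEm.
set W := E2 *m Am *m P.
have AW : A *m W = E1 *m Am *m P by rewrite /W !mulmxA e21.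
have WAW : W *m A *m W = W.
  rewrite /W -!mulmxA (mulmxA A E2) e21 (mulmxA P) pe1 (mulmxA Am) AmEm.
  by rewrite e2s !mulmxA -(mulmxA E1 E A) -(mulmxA E1 (E *m A) E) f1.
split.
- case=> hXAX hAX hXA.
  by rewrite -hXAX -mulmxA hAX -AW mulmxA hXA WAW.
- by move=> ->; split.
Qed.
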